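(* Let $\mathbb K$ be an algebraically closed field and let $q\in\mathbb K$ be nonzero and not a root of unity. Let $U_q(\widehat{sl}_2)$ be the unital associative $\mathbb K$-algebra with generators $e^{\pm}_i, K_i^{\pm1}$ ($i\in\{0,1\}$) and relations $K_iK_i^{-1}=K_i^{-1}K_i=1$; $K_0K_1=K_1K_0$; $K_ie^{\pm}_iK_i^{-1}=q^{\pm2}e^{\pm}_i$; $K_ie^{\pm}_jK_i^{-1}=q^{\mp2}e^{\pm}_j$ for $i\neq j$; $[e^+_i,e^-_i]=\frac{K_i-K_i^{-1}}{q-q^{-1}}$; $[e^{\pm}_0,e^{\mp}_1]=0$; and $(e^{\pm}_i)^3e^{\pm}_j-[3]_q(e^{\pm}_i)^2e^{\pm}_je^{\pm}_i+[3]_qe^{\pm}_ie^{\pm}_j(e^{\pm}_i)^2-e^{\pm}_j(e^{\pm}_i)^3=0$ for $i\neq j$. Let $\mathcal U$ be the unital associative $\mathbb K$-algebra with generators $y^{\pm}_i, k_i^{\pm1}$ ($i\in\{0,1\}$) and relations $k_ik_i^{-1}=k_i^{-1}k_i=1$; $k_0k_1$ is central; $\frac{qy^+_ik_i-q^{-1}k_iy^+_i}{q-q^{-1}}=1$; $\frac{qk_iy^-_i-q^{-1}y^-_ik_i}{q-q^{-1}}=1$; $\frac{qy^-_iy^+_i-q^{-1}y^+_iy^-_i}{q-q^{-1}}=1$; $\frac{qy^+_iy^-_j-q^{-1}y^-_jy^+_i}{q-q^{-1}}=k_0^{-1}k_1^{-1}$ for $i\neq j$; and $(y^{\pm}_i)^3y^{\pm}_j-[3]_q(y^{\pm}_i)^2y^{\pm}_jy^{\pm}_i+[3]_qy^{\pm}_iy^{\pm}_j(y^{\pm}_i)^2-y^{\pm}_j(y^{\pm}_i)^3=0$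 for $i\neq j$. Then there is an isomorphism of $\mathbb K$-algebras $\mathcal U\to U_q(\widehat{sl}_2)$ given by $k_i^{\pm1}\mapsto K_i^{\pm1}$, $y^-_i\mapsto K_i^{-1}+e^-_i$, $y^+_i\mapsto K_i^{-1}-q(q-q^{-1})^2K_i^{-1}e^+_i$, whose inverse is given by $K_i^{\pm1}\mapsto k_i^{\pm1}$, $e^-_i\mapsto y^-_i-k_i^{-1}$, $e^+_i\mapsto \frac{1-k_iy^+_i}{q(q-q^{-1})^2}$.
   Context: $[n]_q=\frac{q^n-q^{-n}}{q-q^{-1}}$ for $n\ge 0$; $[X,Y]=XY-YX$. *)

(* Defs.v *)
(* Algebras given by generators and relations are encoded
   through their universal property. *)
From HB Require Import structures.
From mathcomp Require Import all_boot all_order all_algebra.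
Set Implicit Arguments. Unset Strict Implicit. Unset Printing Implicit Defensive.
Import Order.TTheory GRing.Theory Num.Theory.
Local Open Scope ring_scope.

Definition qint (F : fieldType) (q : F) (n : nat) : F :=
  (q ^+ n - q ^- n) / (q - q^-1).

Definition not_root_of_unity (F : fieldType) (q : F) : Prop :=
  forall n : nat, (0 < n)%N -> q ^+ n != 1.

Definition alg_hom (F : fieldType) (A C : algType F) (f : A -> C) : Prop :=
  [/\ forall x y, f (x + y) = f x + f y,
      forall (a : F) x, f (a *: x) = a *: f x,
      f 1 = 1 &
      forall x y, f (x * y) = f x * f y].

Definition serre (F : fieldType) (q : F) (A : algType F) (x y : A) : A :=
  x ^+ 3 * y - qint q 3 *: (x ^+ 2 * y * x) + qint q 3 *: (x * y * x ^+ 2)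
  - y * x ^+ 3.

Record Uq_gens (F : fieldType) (A : algType F) := UqGens {
  ep : 'I_2 -> A;
  em : 'I_2 -> A;
  Kp : 'I_2 -> A;
  Km : 'I_2 -> A
}.

Definition Uq_rel (F : fieldType) (q : F) (A : algType F) (g : Uq_gens A) : Prop :=
  (forall i, Kp g i * Km g i = 1 /\ Km g i * Kp g i = 1) /\
  (Kp g 0 * Kp g 1 = Kp g 1 * Kp g 0) /\
  (forall i, Kp g i * ep g i * Km g i = q ^+ 2 *: ep g i
             /\ Kp g i * em g i * Km g i = q ^- 2 *: em g i) /\
  (forall i j, i != j ->
               Kp g i * ep g j * Km g i = q ^- 2 *: ep g j
             /\ Kp g i * em g j * Km g i = q ^+ 2 *: em g j) /\
  (forall i, ep g i * em g i - em g i * ep g i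
                = (q - q^-1)^-1 *: (Kp g i - Km g i)) /\
  (ep g 0 * em g 1 - em g 1 * ep g 0 = 0
        /\ em g 0 * ep g 1 - ep g 1 * em g 0 = 0) /\
  (forall i j, i != j ->
        serre q (ep g i) (ep g j) = 0 /\ serre q (em g i) (em g j) = 0).

Definition Uq_hom_on_gens (F : fieldType) (A C : algType F)
    (g : Uq_gens A) (h : Uq_gens C) (f : A -> C) : Prop :=
  forall i, [/\ f (ep g i) = ep h i, f (em g i) = em h i,
                f (Kp g i) = Kp h i & f (Km g i) = Km h i].

Definition is_Uq (F : fieldType) (q : F) (A : algType F) (g : Uq_gens A) : Prop :=
  Uq_rel q g /\
  forall (C : algType F) (h : Uq_gens C), Uq_rel q h ->
    exists f : A -> C, [/\ alg_hom f, Uq_hom_on_gens g h f &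
      forall f' : A -> C, alg_hom f' -> Uq_hom_on_gens g h f' -> f' =1 f].

Record U_gens (F : fieldType) (A : algType F) := UGens {
  yp : 'I_2 -> A;
  ym : 'I_2 -> A;
  kp : 'I_2 -> A;
  km : 'I_2 -> A
}.

Definition U_rel (F : fieldType) (q : F) (A : algType F) (g : U_gens A) : Prop :=
  let c := kp g 0 * kp g 1 in
  (forall i, kp g i * km g i = 1 /\ km g i * kp g i = 1) /\
  (forall i, [/\ c * yp g i = yp g i * c, c * ym g i = ym g i * c,
                 c * kp g i = kp g i * c & c * km g i = km g i * c]) /\
  (forall i, (q - q^-1)^-1 *: (q *: (yp g i * kp g i) - q^-1 *: (kp g i * yp g i)) = 1) /\
  (forall i, (q - q^-1)^-1 *: (q *: (kp g i * ym g i) - q^-1 *: (ym g i * kp g i)) = 1) /\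
  (forall i, (q - q^-1)^-1 *: (q *: (ym g i * yp g i) - q^-1 *: (yp g i * ym g i)) = 1) /\
  (forall i j, i != j ->
        (q - q^-1)^-1 *: (q *: (yp g i * ym g j) - q^-1 *: (ym g j * yp g i))
          = km g 0 * km g 1) /\
  (forall i j, i != j ->
        serre q (yp g i) (yp g j) = 0 /\ serre q (ym g i) (ym g j) = 0).

Definition U_hom_on_gens (F : fieldType) (A C : algType F)
    (g : U_gens A) (h : U_gens C) (f : A -> C) : Prop :=
  forall i, [/\ f (yp g i) = yp h i, f (ym g i) = ym h i,
                f (kp g i) = kp h i & f (km g i) = km h i].

Definition is_U (F : fieldType) (q : F) (A : algType F) (g : U_gens A) : Prop :=
  U_rel q g /\
  forall (C : algType F) (h : U_gens C), U_rel q h ->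
    exists f : A -> C, [/\ alg_hom f, U_hom_on_gens g h f &
      forall f' : A -> C, alg_hom f' -> U_hom_on_gens g h f' -> f' =1 f].

(* Main.v *)
Require Import Defs.
From HB Require Import structures.
From mathcomp Require Import all_boot all_order all_algebra.
From mathcomp Require Import ring.
Set Implicit Arguments. Unset Strict Implicit. Unset Printing Implicit Defensive.
Import Order.TTheory GRing.Theory Num.Theory.
Local Open Scope ring_scope.

Definition evl (C K : Type) (V : zmodType) (ev : C -> K -> V) (l : seq (C * K)) : V :=
  foldr (fun x acc => ev x.1 x.2 + acc) 0 l.

Definition coefk (C : Type) (K : eqType) (cadd : C -> C -> C) (cz : C)
  (l : seq (C * K)) (k : K) : C :=
  foldr (fun x acc => if x.2 == k then cadd x.1 acc else acc) cz l.

Lemma evl_cat (C K : Type) (V : zmodType) (ev : C -> K -> V) l1 l2 :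
  evl ev (l1 ++ l2) = evl ev l1 + evl ev l2.
Proof. by elim: l1 => [|x l IH] /=; rewrite ?add0r // IH addrA. Qed.

Lemma sum_if1 (K : eqType) (V : zmodType) (s : seq K) (k : K) (v : K -> V) :
  uniq s -> k \in s -> \sum_(m <- s) (if k == m then v m else 0) = v k.
Proof.
move=> us ks; rewrite (bigD1_seq k) //= eqxx big1 ?addr0 // => m.
by rewrite eq_sym => /negbTE ->.
Qed.

Lemma collect (C : Type) (K : eqType) (V : zmodType) (cadd : C -> C -> C) (cz : C)
  (ev : C -> K -> V)
  (hadd : forall c1 c2 k, ev (cadd c1 c2) k = ev c1 k + ev c2 k)
  (hz : forall k, ev cz k = 0) (s : seq K) (l : seq (C * K)) :
  uniq s -> {subset map snd l <= s} ->
  evl ev l = \sum_(k <- s) ev (coefk cadd cz l k) k.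
Proof.
move=> us; elim: l => [|x l IH] /= sub.
  by rewrite big1 // => k _; rewrite hz.
rewrite IH; last by move=> k kl; apply: sub; rewrite inE kl orbT.
have xs : x.2 \in s by apply: sub; rewrite inE eqxx.
rewrite -(sum_if1 (fun m => ev x.1 m) us xs) -big_split /=.
apply: eq_bigr => k _; case: eqP => _; by rewrite ?hadd ?add0r.
Qed.

Lemma collect_eq (C : Type) (K : eqType) (V : zmodType) (cadd : C -> C -> C) (cz : C)
  (ev : C -> K -> V)
  (hadd : forall c1 c2 k, ev (cadd c1 c2) k = ev c1 k + ev c2 k)
  (hz : forall k, ev cz k = 0) (l1 l2 : seq (C * K)) :
  (forall k, k \in undup (map snd l1 ++ map snd l2) ->
     ev (coefk cadd cz l1 k) k = ev (coefk cadd cz l2 k) k) ->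
  evl ev l1 = evl ev l2.
Proof.
move=> H.
have us := undup_uniq (map snd l1 ++ map snd l2).
rewrite (collect hadd hz us) ?(collect hadd hz us (l := l2)).
- by apply: eq_big_seq => k kin; apply: H.
- by move=> k kl; rewrite mem_undup mem_cat kl orbT.
- by move=> k kl; rewrite mem_undup mem_cat kl.
Qed.

(* Laurent polynomials with int coefficients *)
Definition lp := seq (int * int).
Definition lmul (l1 l2 : lp) : lp := [seq (x.1 * y.1, x.2 + y.2) | x <- l1, y <- l2].
Definition lcheck (l1 l2 : lp) : bool :=
  all (fun e => coefk +%R 0 l1 e == coefk +%R 0 l2 e) (undup (map snd l1 ++ map snd l2)).

Definition leval (F : fieldType) (t : F) (l : lp) : F :=
  evl (fun (c : int) (e : int) => c%:~R * t ^ e) l.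

Lemma leval_cat (F : fieldType) (t : F) l1 l2 : leval t (l1 ++ l2) = leval t l1 + leval t l2.
Proof. exact: evl_cat. Qed.

Lemma leval_mul (F : fieldType) (t : F) l1 l2 : t != 0 ->
  leval t (lmul l1 l2) = leval t l1 * leval t l2.
Proof.
move=> t0; rewrite /lmul; elim: l1 => [|x l IH]; first by rewrite /leval /= mul0r.
rewrite allpairs_cons leval_cat IH /leval /= mulrDl; congr (_ + _).
clear IH; elim: l2 => [|y l2 IH2] /=; first by rewrite mulr0.
by rewrite IH2 mulrDr intrM expfzDr // mulrACA.
Qed.

Lemma lcheckP (F : fieldType) (t : F) l1 l2 : lcheck l1 l2 -> leval t l1 = leval t l2.
Proof.
move=> /allP H; apply: (collect_eq (cadd := +%R) (cz := 0)).
- by move=> c1 c2 k; rewrite intrD mulrDl.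
- by move=> k; rewrite mul0r.
by move=> k /H /eqP ->.
Qed.


(* monomials a^n b^m E *)
Definition mono := (nat * nat * seq bool)%type.
Definition poly := seq (lp * mono).

Definition evalE (F : fieldType) (V : algType F) (f g : V) (E : seq bool) : V :=
  foldr (fun x acc => (if x then g else f) * acc) 1 E.

Definition evalm (F : fieldType) (V : algType F) (a b f g : V) (m : mono) : V :=
  a ^+ m.1.1 * b ^+ m.1.2 * evalE f g m.2.

Definition kE (E : seq bool) : int := foldr (fun x acc => (if x then -1 else 1) + acc) 0 E.

Definition mmul (x y : lp * mono) : lp * mono :=
  let: (c1, (n1, m1, E1)) := x in let: (c2, (n2, m2, E2)) := y in
  (lmul (lmul c1 c2) [:: (1, kE E1 * (n2%:Z - m2%:Z))], ((n1 + n2)%N, (m1 + m2)%N, E1 ++ E2)).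

Definition pmul (p1 p2 : poly) : poly := [seq mmul x y | x <- p1, y <- p2].
Definition pscale (c : lp) (p : poly) : poly := [seq (lmul c x.1, x.2) | x <- p].

Inductive ex := EA | EB | EF | EG | E1 | EAdd of ex & ex | EMul of ex & ex
  | EScl of lp & ex | EOpp of ex.

Fixpoint normx (e : ex) : poly :=
  match e with
  | EA => [:: ([:: (1%Z, 0%Z)], (1, 0, [::])%N)]
  | EB => [:: ([:: (1%Z, 0%Z)], (0, 1, [::])%N)]
  | EF => [:: ([:: (1%Z, 0%Z)], (0, 0, [:: false])%N)]
  | EG => [:: ([:: (1%Z, 0%Z)], (0, 0, [:: true])%N)]
  | E1 => [:: ([:: (1%Z, 0%Z)], (0, 0, [::])%N)]
  | EAdd e1 e2 => normx e1 ++ normx e2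
  | EMul e1 e2 => pmul (normx e1) (normx e2)
  | EScl c e => pscale c (normx e)
  | EOpp e => pscale [:: (-1, 0)] (normx e)
  end.

Fixpoint evalx (F : fieldType) (t : F) (V : algType F) (a b f g : V) (e : ex) : V :=
  match e with
  | EA => a | EB => b | EF => f | EG => g | E1 => 1
  | EAdd e1 e2 => evalx t a b f g e1 + evalx t a b f g e2
  | EMul e1 e2 => evalx t a b f g e1 * evalx t a b f g e2
  | EScl c e => leval t c *: evalx t a b f g e
  | EOpp e => - evalx t a b f g e
  end.

Definition evalp (F : fieldType) (t : F) (V : algType F) (a b f g : V) (p : poly) : V :=
  evl (fun c m => leval t c *: evalm a b f g m) p.

Definition pcheckG (K : eqType) (p1 p2 : seq (lp * K)) : bool :=
  all (fun m => lcheck (coefk cat [::] p1 m) (coefk cat [::] p2 m))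
      (undup (map snd p1 ++ map snd p2)).

Lemma pcheckGP (K : eqType) (F : fieldType) (t : F) (V : lmodType F) (ev : K -> V) p1 p2 :
  pcheckG p1 p2 -> evl (fun c k => leval t c *: ev k) p1 = evl (fun c k => leval t c *: ev k) p2.
Proof.
move=> /allP H; apply: (collect_eq (cadd := cat) (cz := [::])).
- by move=> c1 c2 k; rewrite leval_cat scalerDl.
- by move=> k; rewrite /leval /= scale0r.
by move=> k /H /lcheckP ->.
Qed.

Definition pcheck (p1 p2 : poly) : bool := pcheckG p1 p2.

Lemma pcheckP (F : fieldType) (t : F) (V : algType F) (a b f g : V) p1 p2 :
  pcheck p1 p2 -> evalp t a b f g p1 = evalp t a b f g p2.
Proof. exact: pcheckGP. Qed.

Definition chyp (F : fieldType) (t : F) (V : algType F) (a b f g : V) : Prop :=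
  [/\ a * b = b * a, f * a = t *: (a * f), f * b = t^-1 *: (b * f),
      g * a = t^-1 *: (a * g) & g * b = t *: (b * g)].

Lemma sAl (F : fieldType) (V : algType F) (k : F) (x y : V) : (k *: x) * y = k *: (x * y).
Proof. by rewrite scalerAl. Qed.
Lemma sAr (F : fieldType) (V : algType F) (k : F) (x y : V) : x * (k *: y) = k *: (x * y).
Proof. by rewrite scalerAr. Qed.

Lemma comm_pow (F : fieldType) (V : algType F) (s : F) (x a : V) n :
  x * a = s *: (a * x) -> x * a ^+ n = s ^+ n *: (a ^+ n * x).
Proof.
move=> H; elim: n => [|n IH]; first by rewrite !expr0 mulr1 mul1r scale1r.
by rewrite exprS mulrA H sAl -mulrA IH sAr scalerA mulrA -exprS exprSr mulrC.
Qed.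

Definition kg (ef eg : int) (E : seq bool) : int :=
  foldr (fun x acc => (if x then eg else ef) + acc) 0 E.

Lemma evalE_gen (F : fieldType) (t : F) (V : algType F) (c f g : V) (ef eg : int) E n :
  t != 0 -> f * c = t ^ ef *: (c * f) -> g * c = t ^ eg *: (c * g) ->
  evalE f g E * c ^+ n = t ^ (kg ef eg E * n%:Z) *: (c ^+ n * evalE f g E).
Proof.
move=> t0 hf hg; elim: E => [|x E IH] /=.
  by rewrite mul1r mulr1 mul0r expr0z scale1r.
rewrite -mulrA IH sAr mulrA.
have -> : (if x then g else f) * c ^+ n =
          t ^ ((if x then eg else ef) * n%:Z) *: (c ^+ n * (if x then g else f)).
  case: x.
    by rewrite (comm_pow _ hg) -exprz_exp.
  by rewrite (comm_pow _ hf) -exprz_exp.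
by rewrite sAl scalerA -expfzDr // mulrDl addrC -mulrA.
Qed.

Lemma kg_kE E : kg 1 (-1) E = kE E.
Proof. by []. Qed.

Lemma kg_kEN E : kg (-1) 1 E = - kE E.
Proof. by elim: E => [|x E IH] //=; rewrite IH opprD; case: x. Qed.

Lemma evalE_cat (F : fieldType) (V : algType F) (f g : V) E1 E2 :
  evalE f g (E1 ++ E2) = evalE f g E1 * evalE f g E2.
Proof. by elim: E1 => [|x E IH] /=; rewrite ?mul1r // IH mulrA. Qed.

Lemma leval1 (F : fieldType) (t : F) k : leval t [:: (1, k)] = t ^ k.
Proof. by rewrite /leval /= addr0 mul1r. Qed.

Lemma evalm_mul (F : fieldType) (t : F) (V : algType F) (a b f g : V) n1 m1 E1 n2 m2 E2 :
  t != 0 -> chyp t a b f g ->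
  evalm a b f g (n1, m1, E1) * evalm a b f g (n2, m2, E2) =
  t ^ (kE E1 * (n2%:Z - m2%:Z)) *: evalm a b f g ((n1 + n2)%N, (m1 + m2)%N, E1 ++ E2).
Proof.
move=> t0 [hab hfa hfb hga hgb]; rewrite /evalm /=.
have hEa := @evalE_gen F t V a f g 1 (-1) E1 n2 t0.
rewrite expr1z -exprz_inv expr1z in hEa; have {}hEa := hEa hfa hga.
have hEb := @evalE_gen F t V b f g (-1) 1 E1 m2 t0.
rewrite expr1z -exprz_inv expr1z in hEb; have {}hEb := hEb hfb hgb.
rewrite kg_kE in hEa; rewrite kg_kEN in hEb.
have hba : b ^+ m1 * a ^+ n2 = a ^+ n2 * b ^+ m1.
  by apply/esym/commrX/commr_sym/commrX.
rewrite !mulrA -(mulrA (a ^+ n1 * b ^+ m1)) hEa sAr !sAl !mulrA.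
rewrite -(mulrA (a ^+ n1)) hba mulrA -(mulrA _ (evalE f g E1)) hEb sAr !sAl scalerA.
rewrite -expfzDr // evalE_cat !exprD !mulrA mulNr -mulrBr; congr (_ *: _).
Qed.

Lemma evalp_cat (F : fieldType) (t : F) (V : algType F) (a b f g : V) p1 p2 :
  evalp t a b f g (p1 ++ p2) = evalp t a b f g p1 + evalp t a b f g p2.
Proof. exact: evl_cat. Qed.

Lemma evalp_scale (F : fieldType) (t : F) (V : algType F) (a b f g : V) c p :
  t != 0 -> evalp t a b f g (pscale c p) = leval t c *: evalp t a b f g p.
Proof.
move=> t0; elim: p => [|x p IH] /=; first by rewrite /evalp /= scaler0.
by rewrite /evalp /= -/(evalp _ _ _ _ _ _) IH leval_mul // scalerDr scalerA.
Qed.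

Lemma evalp_mul (F : fieldType) (t : F) (V : algType F) (a b f g : V) p1 p2 :
  t != 0 -> chyp t a b f g ->
  evalp t a b f g (pmul p1 p2) = evalp t a b f g p1 * evalp t a b f g p2.
Proof.
move=> t0 H; elim: p1 => [|x p1 IH]; first by rewrite /evalp /= mul0r.
rewrite /pmul allpairs_cons evalp_cat -/(pmul p1 p2) IH.
rewrite [evalp _ _ _ _ _ (x :: p1)]/evalp /= -/(evalp _ _ _ _ _ _) mulrDl; congr (_ + _).
clear IH; elim: p2 => [|y p2 IH2]; first by rewrite /evalp /= mulr0.
rewrite /evalp /= -!/(evalp _ _ _ _ _ _) IH2 mulrDr; congr (_ + _).
clear IH2; case: x => c1 [[n1 m1] E1]; case: y => c2 [[n2 m2] E2] /=.
rewrite sAl sAr (evalm_mul _ _ _ _ _ _ t0 H) !leval_mul // leval1 !scalerA.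
by congr (_ *: _); rewrite mulrC mulrA.
Qed.

Lemma normx_ok (F : fieldType) (t : F) (V : algType F) (a b f g : V) e :
  t != 0 -> chyp t a b f g ->
  evalp t a b f g (normx e) = evalx t a b f g e.
Proof.
move=> t0 H; have base : forall m, evalp t a b f g [:: ([:: (1%Z, 0%Z)], m)] = evalm a b f g m.
  by move=> m; rewrite /evalp /leval /= !addr0 expr0z mulr1; apply: scale1r.
elim: e => [||||| e1 IH1 e2 IH2 | e1 IH1 e2 IH2 | c e IH | e IH];
  try by rewrite [normx _]/= base /evalm /= ?expr0 ?expr1 ?mulr1 ?mul1r.
- by rewrite [normx _]/= evalp_cat IH1 IH2.
- by rewrite [normx _]/= evalp_mul // IH1 IH2.
- by rewrite [normx _]/= evalp_scale // IH.
- by rewrite [normx _]/= evalp_scale // IH /leval /= addr0 expr0z mulr1 scaleN1r.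
Qed.

Definition k3 : lp := [:: (1, 1); (1, 0); (1, -1)]%Z.
Definition X2 x := EMul x x.
Definition X3 x := EMul x (EMul x x).
Definition Sx x y :=
  EAdd (EAdd (EAdd (EMul (X3 x) y) (EOpp (EScl k3 (EMul (EMul (X2 x) y) x))))
             (EScl k3 (EMul (EMul x y) (X2 x))))
       (EOpp (EMul y (X3 x))).

Lemma evalSx (F : fieldType) (q t : F) (V : algType F) (a b f g : V) x y :
  qint q 3 = t + 1 + t^-1 ->
  evalx t a b f g (Sx x y) = serre q (evalx t a b f g x) (evalx t a b f g y).
Proof.
move=> h3.
have hk : leval t k3 = qint q 3.
  rewrite h3 /leval /= expr1z expr0z (_ : 1%Z%:~R = 1 :> F) // (_ : t ^ (-1)%Z = t^-1) //.
  by rewrite !mul1r addr0 !addrA.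
by rewrite /serre -hk /= !exprS expr0 !mulr1.
Qed.

Lemma serre_shift (F : fieldType) (q t : F) (V : algType F) (a b f g : V) :
  t != 0 -> qint q 3 = t + 1 + t^-1 -> chyp t a b f g ->
  serre q (a + f) (b + g) = serre q f g.
Proof.
move=> t0 h3 H.
rewrite -(evalSx a b f g (EAdd EA EF) (EAdd EB EG) h3) -(evalSx a b f g EF EG h3).
rewrite -!normx_ok //; apply: pcheckP; vm_compute; reflexivity.
Qed.

Lemma serre_conj (F : fieldType) (q t : F) (V : algType F) (a b f g : V) :
  t != 0 -> qint q 3 = t + 1 + t^-1 -> chyp t a b f g ->
  serre q (a * f) (b * g) = a * a * a * b * serre q f g.
Proof.
move=> t0 h3 H.
rewrite -(evalSx a b f g (EMul EA EF) (EMul EB EG) h3) -(evalSx a b f g EF EG h3).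
rewrite -[a * a * a * b * _]/(evalx t a b f g (EMul (EMul (EMul (EMul EA EA) EA) EB) (Sx EF EG))).
rewrite -!normx_ok //; apply: pcheckP; vm_compute; reflexivity.
Qed.


Inductive ex2 := V2 of nat | O2 | A2 of ex2 & ex2 | M2 of ex2 & ex2 | S2 of nat & ex2 | N2 of ex2.

Fixpoint evalx2 (F : fieldType) (sv : nat -> F) (V : algType F) (env : nat -> V) (e : ex2) : V :=
  match e with
  | V2 i => env i | O2 => 1
  | A2 e1 e2 => evalx2 sv env e1 + evalx2 sv env e2
  | M2 e1 e2 => evalx2 sv env e1 * evalx2 sv env e2
  | S2 c e => sv c *: evalx2 sv env e
  | N2 e => - evalx2 sv env e
  end.

Definition wpoly := seq (lp * seq nat).
Definition evalw (F : fieldType) (V : algType F) (env : nat -> V) (w : seq nat) : V :=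
  foldr (fun i acc => env i * acc) 1 w.
Definition evalq (F : fieldType) (t : F) (V : algType F) (env : nat -> V) (p : wpoly) : V :=
  evl (fun c w => leval t c *: evalw env w) p.
Definition wmul (p1 p2 : wpoly) : wpoly := [seq (lmul x.1 y.1, x.2 ++ y.2) | x <- p1, y <- p2].
Definition wscale (c : lp) (p : wpoly) : wpoly := [seq (lmul c x.1, x.2) | x <- p].

Fixpoint norm2 (sl : nat -> lp) (e : ex2) : wpoly :=
  match e with
  | V2 i => [:: ([:: (1%Z, 0%Z)], [:: i])]
  | O2 => [:: ([:: (1%Z, 0%Z)], [::])]
  | A2 e1 e2 => norm2 sl e1 ++ norm2 sl e2
  | M2 e1 e2 => wmul (norm2 sl e1) (norm2 sl e2)
  | S2 c e => wscale (sl c) (norm2 sl e)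
  | N2 e => wscale [:: (-1, 0)%Z] (norm2 sl e)
  end.

Lemma evalw_cat (F : fieldType) (V : algType F) (env : nat -> V) w1 w2 :
  evalw env (w1 ++ w2) = evalw env w1 * evalw env w2.
Proof. by elim: w1 => [|x w IH] /=; rewrite ?mul1r // IH mulrA. Qed.

Lemma evalq_cat (F : fieldType) (t : F) (V : algType F) (env : nat -> V) p1 p2 :
  evalq t env (p1 ++ p2) = evalq t env p1 + evalq t env p2.
Proof. exact: evl_cat. Qed.

Lemma evalq_cons (F : fieldType) (t : F) (V : algType F) (env : nat -> V) x p :
  evalq t env (x :: p) = leval t x.1 *: evalw env x.2 + evalq t env p.
Proof. by []. Qed.

Lemma evalq_nil (F : fieldType) (t : F) (V : algType F) (env : nat -> V) :
  evalq t env [::] = 0.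
Proof. by []. Qed.

Lemma evalq_scale (F : fieldType) (t : F) (V : algType F) (env : nat -> V) c p :
  t != 0 -> evalq t env (wscale c p) = leval t c *: evalq t env p.
Proof.
move=> t0; elim: p => [|x p IH]; first by rewrite /= ?evalq_nil scaler0.
by rewrite /wscale map_cons !evalq_cons -/(wscale c p) IH leval_mul // scalerDr scalerA.
Qed.

Lemma evalq_sandwich (F : fieldType) (t : F) (V : algType F) (env : nat -> V) c u v p :
  t != 0 ->
  evalq t env [seq (lmul c y.1, u ++ y.2 ++ v) | y <- p] =
  leval t c *: (evalw env u * evalq t env p * evalw env v).
Proof.
move=> t0; elim: p => [|y p IH]; first by rewrite /= ?evalq_nil mulr0 mul0r scaler0.
rewrite map_cons !evalq_cons IH leval_mul // !evalw_cat mulrDr mulrDl scalerDr; congr (_ + _).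
by rewrite sAr sAl scalerA mulrA.
Qed.

Lemma evalq_mul (F : fieldType) (t : F) (V : algType F) (env : nat -> V) p1 p2 :
  t != 0 -> evalq t env (wmul p1 p2) = evalq t env p1 * evalq t env p2.
Proof.
move=> t0; elim: p1 => [|x p1 IH]; first by rewrite /= ?evalq_nil mul0r.
rewrite /wmul allpairs_cons evalq_cat -/(wmul p1 p2) IH evalq_cons mulrDl; congr (_ + _).
rewrite sAl; have := evalq_sandwich env x.1 x.2 [::] p2 t0; rewrite mulr1 => <-.
by apply: congr1; apply: eq_map => y; rewrite cats0.
Qed.

Lemma norm2_ok (F : fieldType) (t : F) (V : algType F) (env : nat -> V) sl sv e :
  t != 0 -> (forall i, leval t (sl i) = sv i) ->
  evalq t env (norm2 sl e) = evalx2 sv env e.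
Proof.
move=> t0 hs; have base : forall w, evalq t env [:: ([:: (1%Z, 0%Z)], w)] = evalw env w.
  by move=> w; rewrite evalq_cons evalq_nil /leval /= ?addr0 expr0z mulr1; apply: scale1r.
elim: e => [i | | e1 IH1 e2 IH2 | e1 IH1 e2 IH2 | c e IH | e IH].
- by rewrite [norm2 _ _]/= base /= mulr1.
- by rewrite [norm2 _ _]/= base.
- by rewrite [norm2 _ _]/= evalq_cat IH1 IH2.
- by rewrite [norm2 _ _]/= evalq_mul // IH1 IH2.
- by rewrite [norm2 _ _]/= evalq_scale // IH hs.
- by rewrite [norm2 _ _]/= evalq_scale // IH /leval /= addr0 expr0z mulr1 scaleN1r.
Qed.

Fixpoint findsplit (l w : seq nat) : option (seq nat * seq nat) :=
  if take (size l) w == l then Some ([::], drop (size l) w) else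
  match w with
  | [::] => None
  | x :: w' => omap (fun uv => (x :: uv.1, uv.2)) (findsplit l w')
  end.

Lemma findsplitP l w u v : findsplit l w = Some (u, v) -> w = u ++ l ++ v.
Proof.
elim: w u v => [|x w IH] u v /=.
  by case: eqP => // <- [<- <-].
case: eqP => [E [<- <-] | _].
  by rewrite /= -{1}(cat_take_drop (size l) (x :: w)) E.
case E: (findsplit l w) => [[u' v']|] //= [<- <-].
by rewrite (IH _ _ E).
Qed.

Definition rule := (seq nat * wpoly)%type.

Fixpoint rw_term (rs : seq rule) (x : lp * seq nat) : wpoly :=
  match rs with
  | [::] => [:: x]
  | r :: rs' =>
    match findsplit r.1 x.2 with
    | Some (u, v) => [seq (lmul x.1 y.1, u ++ y.2 ++ v) | y <- r.2]
    | None => rw_term rs' x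
    end
  end.

Definition step (rs : seq rule) (p : wpoly) : wpoly := flatten (map (rw_term rs) p).

Definition rules_ok (F : fieldType) (t : F) (V : algType F) (env : nat -> V) (rs : seq rule) : Prop :=
  foldr (fun r P => evalw env r.1 = evalq t env r.2 /\ P) True rs.

Lemma rw_term_ok (F : fieldType) (t : F) (V : algType F) (env : nat -> V) rs x :
  t != 0 -> rules_ok t env rs -> evalq t env (rw_term rs x) = leval t x.1 *: evalw env x.2.
Proof.
move=> t0; elim: rs => [|r rs IH].
  by move=> _; rewrite [rw_term _ _]/= evalq_cons evalq_nil addr0.
move=> /= [hr hrs]; case E: (findsplit r.1 x.2) => [[u v]|]; last exact: IH.
rewrite evalq_sandwich // -hr (findsplitP E) !evalw_cat.
by rewrite mulrA.
Qed.

Lemma step_ok (F : fieldType) (t : F) (V : algType F) (env : nat -> V) rs p :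
  t != 0 -> rules_ok t env rs -> evalq t env (step rs p) = evalq t env p.
Proof.
move=> t0 hrs; elim: p => [|x p IH] //.
by rewrite /step map_cons (_ : flatten (rw_term rs x :: map (rw_term rs) p) = rw_term rs x ++ flatten (map (rw_term rs) p)) // evalq_cat -/(step rs p) IH rw_term_ok // evalq_cons.
Qed.

Lemma iter_ok (F : fieldType) (t : F) (V : algType F) (env : nat -> V) rs n p :
  t != 0 -> rules_ok t env rs -> evalq t env (iter n (step rs) p) = evalq t env p.
Proof. by move=> t0 hrs; elim: n => [|n IH] //=; rewrite step_ok. Qed.

Lemma engine2 (F : fieldType) (t : F) (V : algType F) (env : nat -> V) sl sv rs n e1 e2 :
  t != 0 -> (forall i, leval t (sl i) = sv i) -> rules_ok t env rs ->
  pcheckG (iter n (step rs) (norm2 sl e1)) (iter n (step rs) (norm2 sl e2)) ->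
  evalx2 sv env e1 = evalx2 sv env e2.
Proof.
move=> t0 hs hrs /(pcheckGP t (fun w => evalw env w)) H.
by rewrite -!(norm2_ok env _ t0 hs) -(iter_ok n _ t0 hrs) -(iter_ok n (norm2 sl e2) t0 hrs).
Qed.

Ltac lidx x l :=
  lazymatch l with
  | x :: _ => constr:(0%N)
  | _ :: ?l' => let n := lidx x l' in constr:(S n)
  end.

Ltac reify t ENV SV :=
  match constr:(true) with
  | _ => let i := lidx t ENV in constr:(V2 i)
  | _ => reify_op t ENV SV
  end
with reify_op t ENV SV :=
  lazymatch t with
  | @GRing.add _ ?a ?b => let x := reify a ENV SV in let y := reify b ENV SV in constr:(A2 x y)
  | @GRing.opp _ ?a => let x := reify a ENV SV in constr:(N2 x)
  | @GRing.mul _ ?a ?b => let x := reify a ENV SV in let y := reify b ENV SV in constr:(M2 x y)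
  | @GRing.scale _ _ ?c ?a => let x := reify a ENV SV in let i := lidx c SV in constr:(S2 i x)
  | @GRing.one _ => constr:(O2)
  end.

Ltac engine t0 ENV SV SL RS N :=
  lazymatch goal with
  | |- ?L = ?R =>
    let e1 := reify L ENV SV in let e2 := reify R ENV SV in
    apply: (@engine2 _ _ _ (fun i => nth 0 ENV i) (fun i => nth [::] SL i) (fun i => nth 0 SV i) RS N e1 e2 t0);
    [ | | vm_compute; reflexivity]
  end.

Definition lpq (k : int) : lp := [:: (1%Z, k)].
Definition lpd : lp := [:: (1%Z, 1%Z); (-1, -1)%Z].
Definition lpc : lp := [:: (1%Z, 3%Z); (-2, 1)%Z; (1%Z, -1)%Z].

Lemma lpq1 (F : fieldType) (q : F) : leval q (lpq 1) = q.
Proof. by rewrite /leval /= addr0 mul1r. Qed.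
Lemma lpqN1 (F : fieldType) (q : F) : leval q (lpq (-1)) = q^-1.
Proof. by rewrite /leval /= addr0 mul1r. Qed.
Lemma lpq2 (F : fieldType) (q : F) : leval q (lpq 2) = q ^+ 2.
Proof. by rewrite /leval /= addr0 mul1r. Qed.
Lemma lpqN2 (F : fieldType) (q : F) : leval q (lpq (-2)) = q ^- 2.
Proof. by rewrite /leval /= addr0 mul1r. Qed.
Definition lpa (k : int) : lp := [:: (1%Z, 0%Z); (-1, k)%Z].
Definition lpb (k : int) : lp := [:: (1%Z, k); (-1, 0)%Z].
Lemma lpa2 (F : fieldType) (q : F) : leval q (lpa 2) = 1 - q ^+ 2.
Proof. by rewrite /leval /= addr0 mul1r mulN1r expr0z. Qed.
Lemma lpaN2 (F : fieldType) (q : F) : leval q (lpa (-2)) = 1 - q ^- 2.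
Proof. by rewrite /leval /= addr0 mul1r mulN1r expr0z. Qed.
Lemma lpb2 (F : fieldType) (q : F) : leval q (lpb 2) = q ^+ 2 - 1.
Proof. by rewrite /leval /= addr0 mul1r mulN1r expr0z. Qed.
Lemma lpdE (F : fieldType) (q : F) : leval q lpd = q - q^-1.
Proof. by rewrite /leval /= addr0 !mulN1r !mul1r. Qed.

Lemma lpq0 (F : fieldType) (q : F) : leval q (lpq 0) = 1.
Proof. by rewrite /leval /= addr0 mul1r. Qed.

Arguments leval : simpl never.

Lemma scal_cons (F : fieldType) (t : F) a b L LF :
  leval t a = b -> (forall i, leval t (nth [::] L i) = nth 0 LF i) ->
  forall i, leval t (nth [::] (a :: L) i) = nth 0 (b :: LF) i.
Proof. by move=> h H [|i] //=. Qed.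

Lemma scal_nil (F : fieldType) (t : F) : forall i, leval t (nth [::] [::] i) = nth 0 ([::] : seq F) i.
Proof. by move=> [|i]. Qed.

Lemma rules_cons (F : fieldType) (t : F) (V : algType F) (env : nat -> V) l r rs :
  evalw env l = evalq t env r -> rules_ok t env rs -> rules_ok t env ((l, r) :: rs).
Proof. by move=> h H; split. Qed.

Lemma rules_nil (F : fieldType) (t : F) (V : algType F) (env : nat -> V) : rules_ok t env [::].
Proof. by []. Qed.

Ltac scal_tac :=
  repeat (apply: scal_cons; first by rewrite ?(lpq0, lpq1, lpqN1, lpq2, lpqN2, lpdE, lpa2, lpaN2, lpb2));
  apply: scal_nil.

Ltac rules_tac :=
  repeat (apply: rules_cons; first by rewrite /evalq /evl /evalw /= ?(lpq0, lpq1, lpqN1, lpq2, lpqN2, lpdE, lpa2, lpaN2, lpb2) ?mulr1 ?addr0 ?scale1r ?mulrA //);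
  apply: rules_nil.


Lemma I2_neq (i j : 'I_2) : i != j -> (i = 0 /\ j = 1) \/ (i = 1 /\ j = 0).
Proof.
move: i j => [[|[|i]] Hi] [[|[|j]] Hj] //= _.
- by left; split; apply: val_inj.
- by right; split; apply: val_inj.
Qed.

Lemma I2_oth (i : 'I_2) : exists j : 'I_2, i != j.
Proof. by move: i => [[|[|i]] Hi] //; [exists 1 | exists 0]. Qed.

Lemma conj_comm (F : fieldType) (V : algType F) (K Ki x : V) (s : F) :
  K * Ki = 1 -> Ki * K = 1 -> K * x * Ki = s *: x ->
  x * Ki = s *: (Ki * x) /\ K * x = s *: (x * K).
Proof.
move=> h1 h2 h; split.
  by rewrite -[x * Ki]mul1r -h2 -mulrA (mulrA K) h sAr.
by rewrite -[K * x]mulr1 -h2 mulrA h sAl.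
Qed.

Lemma conj_comm2 (F : fieldType) (V : algType F) (K Ki x : V) (s : F) :
  s != 0 -> K * Ki = 1 -> Ki * K = 1 -> K * x * Ki = s *: x ->
  x * Ki = s *: (Ki * x) /\ x * K = s^-1 *: (K * x).
Proof.
move=> s0 h1 h2 h; have [-> h'] := conj_comm h1 h2 h; split => //.
by rewrite h' scalerA mulVf ?scale1r.
Qed.

Lemma conj_scale (F : fieldType) (V : algType F) (K Ki x : V) (s c : F) :
  K * x * Ki = s *: x -> K * (c *: x) * Ki = s *: (c *: x).
Proof. by move=> h; rewrite sAr sAl h !scalerA mulrC. Qed.

Lemma comm_conj (F : fieldType) (V : algType F) (K Ki x : V) (s : F) :
  K * Ki = 1 -> x * Ki = s *: (Ki * x) -> K * x * Ki = s *: x.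
Proof. by move=> h1 h; rewrite -mulrA h sAr mulrA h1 mul1r. Qed.

Lemma comm_inv (F : fieldType) (V : algType F) (a a' b : V) :
  a * b = b * a -> a * a' = 1 -> a' * a = 1 -> a' * b = b * a'.
Proof.
move=> hab h1 h2.
by rewrite -[a' * b]mulr1 -h1 mulrA -(mulrA a') -hab !mulrA h2 mul1r.
Qed.

Lemma qinv2 (F : fieldType) (q : F) : q != 0 -> (q ^- 2)^-1 = q ^+ 2.
Proof. by move=> q0; rewrite invrK. Qed.

Definition cc (F : fieldType) (q : F) := q * (q - q^-1) ^+ 2.
Arguments cc : simpl never.

Definition rulesA : seq rule := [::
  ([:: 0; 1], [:: (lpq 0, [::])]); ([:: 1; 0], [:: (lpq 0, [::])]);
  ([:: 4; 5], [:: (lpq 0, [::])]); ([:: 5; 4], [:: (lpq 0, [::])]);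
  ([:: 4; 0], [:: (lpq 0, [:: 0; 4])]); ([:: 5; 0], [:: (lpq 0, [:: 0; 5])]);
  ([:: 4; 1], [:: (lpq 0, [:: 1; 4])]); ([:: 5; 1], [:: (lpq 0, [:: 1; 5])]);
  ([:: 2; 0], [:: (lpq (-2), [:: 0; 2])]); ([:: 2; 1], [:: (lpq 2, [:: 1; 2])]);
  ([:: 2; 4], [:: (lpq 2, [:: 4; 2])]); ([:: 2; 5], [:: (lpq (-2), [:: 5; 2])]);
  ([:: 3; 0], [:: (lpq 2, [:: 0; 3])]); ([:: 3; 1], [:: (lpq (-2), [:: 1; 3])]);
  ([:: 3; 4], [:: (lpq (-2), [:: 4; 3])]); ([:: 3; 5], [:: (lpq 2, [:: 5; 3])]);
  ([:: 6; 4], [:: (lpq (-2), [:: 4; 6])]); ([:: 6; 5], [:: (lpq 2, [:: 5; 6])]);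
  ([:: 6; 0], [:: (lpq 2, [:: 0; 6])]); ([:: 6; 1], [:: (lpq (-2), [:: 1; 6])]);
  ([:: 7; 4], [:: (lpq 2, [:: 4; 7])]); ([:: 7; 5], [:: (lpq (-2), [:: 5; 7])]);
  ([:: 7; 0], [:: (lpq (-2), [:: 0; 7])]); ([:: 7; 1], [:: (lpq 2, [:: 1; 7])]);
  ([:: 2; 3], [:: (lpq 0, [:: 3; 2]); (lpb 2, [:: 0]); (lpa 2, [:: 1])]);
  ([:: 6; 7], [:: (lpq 0, [:: 7; 6]); (lpb 2, [:: 4]); (lpa 2, [:: 5])]);
  ([:: 2; 7], [:: (lpq 0, [:: 7; 2])]); ([:: 6; 3], [:: (lpq 0, [:: 3; 6])])]%N.

Definition envA (F : fieldType) (q : F) (A : algType F) (G : Uq_gens A) (i j : 'I_2) : seq A :=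
  [:: Kp G i; Km G i; cc q *: ep G i; em G i; Kp G j; Km G j; cc q *: ep G j; em G j].

Lemma rulesA_ok (F : fieldType) (q : F) (A : algType F) (G : Uq_gens A) (i j : 'I_2) :
  q != 0 -> q - q^-1 != 0 -> Uq_rel q G -> i != j ->
  rules_ok q (fun k => nth 0 (envA q G i j) k) rulesA.
Proof.
move=> q0 d0 [hinv [hK01 [hc1 [hc2 [hcom [[h01 h10] _]]]]]] hij.
have q2 : q ^+ 2 != 0 by rewrite expf_neq0.
have qq1 : q * q - 1 != 0 by rewrite -(mulfV q0) -mulrBr mulf_neq0.
have qm2 : q ^- 2 != 0 by rewrite invr_eq0.
have hji : j != i by rewrite eq_sym.
have hKij : Kp G i * Kp G j = Kp G j * Kp G i.
  by have [[-> ->] | [-> ->]] := I2_neq hij.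
have hEF : forall k l, k != l -> ep G k * em G l = em G l * ep G k.
  move=> k l /I2_neq [[-> ->] | [-> ->]]; apply/eqP; rewrite -subr_eq0; apply/eqP => //.
  by rewrite -opprB h10 oppr0.
have [hi1 hi2] := hinv i; have [hj1 hj2] := hinv j.
have hKiKj : Km G i * Kp G j = Kp G j * Km G i by apply: comm_inv hKij _ _.
have hKjKi : Km G j * Kp G i = Kp G i * Km G j by apply: comm_inv (esym hKij) _ _.
have hKiKi : Km G j * Km G i = Km G i * Km G j by apply: comm_inv (esym hKiKj) _ _.
have c0 := hc1 i; have c1 := hc1 j; have c2 := hc2 i j hij; have c3 := hc2 j i hji.
case: c0 => /(conj_scale (cc q)) c0a c0b; case: c1 => /(conj_scale (cc q)) c1a c1b.
case: c2 => /(conj_scale (cc q)) c2a c2b; case: c3 => /(conj_scale (cc q)) c3a c3b.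
have [e1 e2] := conj_comm2 q2 hi1 hi2 c0a.
have [e3 e4] := conj_comm2 qm2 hi1 hi2 c0b.
have [e5 e6] := conj_comm2 q2 hj1 hj2 c1a.
have [e7 e8] := conj_comm2 qm2 hj1 hj2 c1b.
have [e9 e10] := conj_comm2 qm2 hi1 hi2 c2a.
have [e11 e12] := conj_comm2 q2 hi1 hi2 c2b.
have [e13 e14] := conj_comm2 qm2 hj1 hj2 c3a.
have [e15 e16] := conj_comm2 q2 hj1 hj2 c3b.
rewrite ?qinv2 // in e1 e2 e3 e4 e5 e6 e7 e8 e9 e10 e11 e12 e13 e14 e15 e16.
have hEFi : forall k, cc q *: ep G k * em G k = em G k * (cc q *: ep G k) +
   ((q ^+ 2 - 1) *: Kp G k + (1 - q ^+ 2) *: Km G k).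
  move=> k.
  have H : cc q *: (ep G k * em G k - em G k * ep G k) =
           (q ^+ 2 - 1) *: Kp G k + (1 - q ^+ 2) *: Km G k.
    rewrite hcom scalerA (_ : 1 - q ^+ 2 = - (q ^+ 2 - 1)); last by rewrite opprB.
    rewrite scaleNr -scalerBr /cc; congr (_ *: _); field; by rewrite q0 qq1.
  by rewrite sAl sAr -H -scalerDr (addrC (em G k * ep G k)) subrK.
have hEFij : forall k l, k != l -> cc q *: ep G k * em G l = em G l * (cc q *: ep G k).
  by move=> k l /hEF h; rewrite sAl sAr h.
have x1 := hEFij i j hij; have x2 := hEFij j i hji.
have x3 := hEFi i; have x4 := hEFi j.
rewrite /rulesA /envA; rules_tac.
Qed.

Lemma scale_eq1 (F : fieldType) (V : algType F) (d : F) (X : V) :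
  d != 0 -> X = d *: 1 -> d^-1 *: X = 1.
Proof. by move=> d0 ->; rewrite scalerA mulVf ?scale1r. Qed.

Lemma scale_eqw (F : fieldType) (V : algType F) (d : F) (X W : V) :
  d != 0 -> X = d *: W -> d^-1 *: X = W.
Proof. by move=> d0 ->; rewrite scalerA mulVf ?scale1r. Qed.

Ltac engA q q0 G i j N :=
  engine q0 [:: Kp G i; Km G i; cc q *: ep G i; em G i; Kp G j; Km G j; cc q *: ep G j; em G j]
    [:: q; q^-1; q - q^-1; q^+2; q^-2] [:: lpq 1; lpq (-1); lpd; lpq 2; lpq (-2)] rulesA N;
  [scal_tac | by apply: rulesA_ok].

Lemma partA_rels (F : fieldType) (q : F) (A : algType F) (G : Uq_gens A) (i j : 'I_2) :
  q != 0 -> q - q^-1 != 0 -> Uq_rel q G -> i != j ->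
  let yp k := Km G k - Km G k * (cc q *: ep G k) in
  let ym k := Km G k + em G k in
  [/\ q *: (yp i * Kp G i) - q^-1 *: (Kp G i * yp i) = (q - q^-1) *: 1,
      q *: (Kp G i * ym i) - q^-1 *: (ym i * Kp G i) = (q - q^-1) *: 1,
      q *: (ym i * yp i) - q^-1 *: (yp i * ym i) = (q - q^-1) *: 1,
      q *: (yp i * ym j) - q^-1 *: (ym j * yp i) = (q - q^-1) *: (Km G i * Km G j) &
      [/\ Kp G i * Kp G j * yp i = yp i * (Kp G i * Kp G j),
          Kp G i * Kp G j * ym i = ym i * (Kp G i * Kp G j),
          Kp G i * Kp G j * Kp G i = Kp G i * (Kp G i * Kp G j) &
          Kp G i * Kp G j * Km G i = Km G i * (Kp G i * Kp G j)]].
Proof.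
move=> q0 d0 hG hij yp ym; rewrite /yp /ym.
split; [engA q q0 G i j 6%N | engA q q0 G i j 6%N | engA q q0 G i j 10%N | engA q q0 G i j 10%N | ].
split; engA q q0 G i j 8%N.
Qed.

Lemma qsolve (F : fieldType) (q : F) (V : algType F) (u v w : V) :
  q != 0 -> q - q^-1 != 0 -> (q - q^-1)^-1 *: (q *: u - q^-1 *: v) = w ->
  u = q ^- 2 *: v + (1 - q ^- 2) *: w /\ v = q ^+ 2 *: u + (1 - q ^+ 2) *: w.
Proof.
move=> q0 d0 h.
have h' : q *: u - q^-1 *: v = (q - q^-1) *: w by rewrite -h scalerA mulfV ?scale1r.
have hu : q *: u = q^-1 *: v + (q - q^-1) *: w by rewrite -h' addrC subrK.
have hv : q^-1 *: v = q *: u - (q - q^-1) *: w by rewrite -h' opprB addrC subrK.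
split.
  rewrite -[u]scale1r -(mulVf q0) -scalerA hu scalerDr !scalerA; congr (_ *: _ + _ *: _).
    by rewrite -invfM expr2.
  by field.
rewrite -[v]scale1r -(mulVf (invr_neq0 q0)) -scalerA hv scalerBr !scalerA.
rewrite invrK -scaleNr; congr (_ *: _ + _ *: _); by field.
Qed.

Lemma inv_rule (F : fieldType) (V : algType F) (y k ki : V) (a b a' b' : F) :
  k * ki = 1 -> ki * k = 1 -> a' * a = 1 -> b' = - (a' * b) ->
  y * k = a *: (k * y) + b *: 1 -> y * ki = a' *: (ki * y) + b' *: (ki * ki).
Proof.
move=> h1 h2 ha hb h.
have H : ki * y = a *: (y * ki) + b *: (ki * ki).
  by rewrite -{1}[y]mulr1 -h1 (mulrA y) h mulrDl mulrDr !sAl !sAr !mul1r !mulrA h2 mul1r.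
rewrite H scalerDr scalerA ha scale1r hb scaleNr scalerA addrK.
by [].
Qed.

Lemma cross1 (F : fieldType) (V : algType F) (y ko ks kis : V) (a b : F) :
  ks * kis = 1 -> ko * ks * y = y * (ko * ks) ->
  y * kis = a *: (kis * y) + b *: (kis * kis) -> y * ko = a *: (ko * y) + b *: (ko * kis).
Proof.
move=> h1 hc h.
rewrite -[ko]mulr1 -h1 (mulrA ko) mulrA -hc -mulrA h mulrDr !sAr !mulrA.
by rewrite -(mulrA ko ks kis) h1 !mulr1.
Qed.

Lemma cross2 (F : fieldType) (V : algType F) (y kio kis ks : V) (a b : F) :
  kis * ks = 1 -> kio * kis * y = y * (kio * kis) ->
  y * ks = a *: (ks * y) + b *: 1 -> y * kio = a *: (kio * y) + b *: (kio * kis).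
Proof.
move=> h1 hc h.
rewrite -[kio]mulr1 -h1 (mulrA kio) mulrA -hc -mulrA h mulrDr !sAr !mulrA mulr1.
by rewrite -(mulrA kio kis ks) h1 mulr1.
Qed.

Definition rulesB : seq rule := [::
  ([:: 0; 1], [:: (lpq 0, [::])]); ([:: 1; 0], [:: (lpq 0, [::])]);
  ([:: 4; 5], [:: (lpq 0, [::])]); ([:: 5; 4], [:: (lpq 0, [::])]);
  ([:: 4; 0], [:: (lpq 0, [:: 0; 4])]); ([:: 5; 0], [:: (lpq 0, [:: 0; 5])]);
  ([:: 4; 1], [:: (lpq 0, [:: 1; 4])]); ([:: 5; 1], [:: (lpq 0, [:: 1; 5])]);
  ([:: 2; 0], [:: (lpq (-2), [:: 0; 2]); (lpa (-2), [::])]);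
  ([:: 3; 0], [:: (lpq 2, [:: 0; 3]); (lpa 2, [::])]);
  ([:: 3; 2], [:: (lpq (-2), [:: 2; 3]); (lpa (-2), [::])]);
  ([:: 2; 1], [:: (lpq 2, [:: 1; 2]); (lpa 2, [:: 1; 1])]);
  ([:: 3; 1], [:: (lpq (-2), [:: 1; 3]); (lpa (-2), [:: 1; 1])]);
  ([:: 2; 4], [:: (lpq 2, [:: 4; 2]); (lpa 2, [:: 4; 1])]);
  ([:: 3; 4], [:: (lpq (-2), [:: 4; 3]); (lpa (-2), [:: 4; 1])]);
  ([:: 2; 5], [:: (lpq (-2), [:: 5; 2]); (lpa (-2), [:: 5; 1])]);
  ([:: 3; 5], [:: (lpq 2, [:: 5; 3]); (lpa 2, [:: 5; 1])]);
  ([:: 6; 4], [:: (lpq (-2), [:: 4; 6]); (lpa (-2), [::])]);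
  ([:: 7; 4], [:: (lpq 2, [:: 4; 7]); (lpa 2, [::])]);
  ([:: 7; 6], [:: (lpq (-2), [:: 6; 7]); (lpa (-2), [::])]);
  ([:: 6; 5], [:: (lpq 2, [:: 5; 6]); (lpa 2, [:: 5; 5])]);
  ([:: 7; 5], [:: (lpq (-2), [:: 5; 7]); (lpa (-2), [:: 5; 5])]);
  ([:: 6; 0], [:: (lpq 2, [:: 0; 6]); (lpa 2, [:: 0; 5])]);
  ([:: 7; 0], [:: (lpq (-2), [:: 0; 7]); (lpa (-2), [:: 0; 5])]);
  ([:: 6; 1], [:: (lpq (-2), [:: 1; 6]); (lpa (-2), [:: 1; 5])]);
  ([:: 7; 1], [:: (lpq 2, [:: 1; 7]); (lpa 2, [:: 1; 5])]);
  ([:: 7; 2], [:: (lpq 2, [:: 2; 7]); (lpa 2, [:: 1; 5])]);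
  ([:: 3; 6], [:: (lpq 2, [:: 6; 3]); (lpa 2, [:: 1; 5])])]%N.

Lemma rulesB_ok (F : fieldType) (q : F) (A : algType F) (g : U_gens A) (i j : 'I_2) :
  q != 0 -> q - q^-1 != 0 -> U_rel q g -> i != j ->
  rules_ok q (fun k => nth 0 [:: kp g i; km g i; yp g i; ym g i; kp g j; km g j; yp g j; ym g j] k) rulesB.
Proof.
move=> q0 d0 [hinv [hcent [h3 [h4 [h5 [h6 _]]]]]] hij.
have hji : j != i by rewrite eq_sym.
have [hi1 hi2] := hinv i; have [hj1 hj2] := hinv j.
have [_ _ c1 _] := hcent 1.
have h01 : kp g 0 * kp g 1 = kp g 1 * kp g 0.
  have [hinv1 _] := hinv 1.
  apply: esym; rewrite -[kp g 1 * kp g 0]mulr1 -hinv1 mulrA -(mulrA (kp g 1)) -c1.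
  by rewrite -mulrA hinv1 mulr1.
have hC : kp g 0 * kp g 1 = kp g i * kp g j by have [[-> ->] | [-> ->]] := I2_neq hij.
have hC' : kp g 0 * kp g 1 = kp g j * kp g i by have [[-> ->] | [-> ->]] := I2_neq hij.
have hkk : kp g i * kp g j = kp g j * kp g i by rewrite -hC -hC'.
have hKiKj : km g i * kp g j = kp g j * km g i by apply: comm_inv hkk _ _.
have hKjKi : km g j * kp g i = kp g i * km g j by apply: comm_inv (esym hkk) _ _.
have hKiKi : km g j * km g i = km g i * km g j by apply: comm_inv (esym hKiKj) _ _.
have hD : forall y, kp g 0 * kp g 1 * y = y * (kp g 0 * kp g 1) ->
  [/\ kp g i * kp g j * y = y * (kp g i * kp g j), kp g j * kp g i * y = y * (kp g j * kp g i),
      km g i * km g j * y = y * (km g i * km g j) & km g j * km g i * y = y * (km g j * km g i)].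
  move=> y hy; split; rewrite -?hC -?hC' //.
    apply: (@comm_inv _ _ (kp g j * kp g i)); first by rewrite -hC'.
      by rewrite -mulrA (mulrA (kp g i)) hi1 mul1r hj1.
    by rewrite -mulrA (mulrA (km g j)) hj2 mul1r hi2.
  apply: (@comm_inv _ _ (kp g i * kp g j)); first by rewrite -hC.
    by rewrite -mulrA (mulrA (kp g j)) hj1 mul1r hi1.
  by rewrite -mulrA (mulrA (km g i)) hi2 mul1r hj2.
have [a1 _ _ _] := hcent i; have [_ a2 _ _] := hcent i.
have [a3 _ _ _] := hcent j; have [_ a4 _ _] := hcent j.
have [b1 b2 b3 b4] := hD _ a1; have [b5 b6 b7 b8] := hD _ a2.
have [b9 b10 b11 b12] := hD _ a3; have [b13 b14 b15 b16] := hD _ a4.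
have qq : q ^+ 2 * q ^- 2 = 1 by rewrite mulfV // expf_neq0.
have qq' : q ^- 2 * q ^+ 2 = 1 by rewrite mulVf // expf_neq0.
have e1 : 1 - q ^+ 2 = - (q ^+ 2 * (1 - q ^- 2)) by field.
have e2 : 1 - q ^- 2 = - (q ^- 2 * (1 - q ^+ 2)) by field.
have [r1 _] := qsolve q0 d0 (h3 i); have [_ r2] := qsolve q0 d0 (h4 i).
have [r3 _] := qsolve q0 d0 (h5 i).
have [s1 _] := qsolve q0 d0 (h3 j); have [_ s2] := qsolve q0 d0 (h4 j).
have [s3 _] := qsolve q0 d0 (h5 j).
have r4 := inv_rule hi1 hi2 qq e1 r1; have r5 := inv_rule hi1 hi2 qq' e2 r2.
have s4 := inv_rule hj1 hj2 qq e1 s1; have s5 := inv_rule hj1 hj2 qq' e2 s2.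
have r6 := cross1 hi1 b2 r4; have r7 := cross1 hi1 b6 r5.
have r8 := cross2 hi2 b4 r1; have r9 := cross2 hi2 b8 r2.
have s6 := cross1 hj1 b9 s4; have s7 := cross1 hj1 b13 s5.
have s8 := cross2 hj2 b11 s1; have s9 := cross2 hj2 b15 s2.
have hCi : km g 0 * km g 1 = km g i * km g j.
  have [[hi hj] | [hi hj]] := I2_neq hij; first by rewrite hi hj.
  by move: hKiKi; rewrite hi hj.
have [_ t1] := qsolve q0 d0 (h6 i j hij); have [_ t2] := qsolve q0 d0 (h6 j i hji).
rewrite hCi in t1 t2.
rewrite /rulesB; rules_tac.
Qed.

Ltac engB q q0 g i j N :=
  engine q0 [:: kp g i; km g i; yp g i; ym g i; kp g j; km g j; yp g j; ym g j]
    [:: q; q^-1; q - q^-1; q^+2; q^-2; q^+2 - 1] [:: lpq 1; lpq (-1); lpd; lpq 2; lpq (-2); lpb 2] rulesB N;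
  [scal_tac | by apply: rulesB_ok].

Lemma partB_rels (F : fieldType) (q : F) (A : algType F) (g : U_gens A) (i j : 'I_2) :
  q != 0 -> q - q^-1 != 0 -> U_rel q g -> i != j ->
  let X k := 1 - kp g k * yp g k in
  let f k := ym g k - km g k in
  [/\ kp g i * X i * km g i = q ^+ 2 *: X i,
      kp g i * f i * km g i = q ^- 2 *: f i,
      kp g i * X j * km g i = q ^- 2 *: X j,
      kp g i * f j * km g i = q ^+ 2 *: f j &
      [/\ X i * f i - f i * X i = (q ^+ 2 - 1) *: (kp g i - km g i),
          X i * f j - f j * X i = 0 &
          kp g i * kp g j = kp g j * kp g i]].
Proof.
move=> q0 d0 hG hij X f; rewrite /X /f.
split; [engB q q0 g i j 10%N | engB q q0 g i j 10%N | engB q q0 g i j 10%N | engB q q0 g i j 10%N | ].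
split; [engB q q0 g i j 12%N | | engB q q0 g i j 4%N].
apply/eqP; rewrite subr_eq0; apply/eqP; engB q q0 g i j 12%N.
Qed.

Lemma serre_scale (F : fieldType) (q : F) (V : algType F) (a b : F) (x y : V) :
  serre q (a *: x) (b *: y) = (a ^+ 3 * b) *: serre q x y.
Proof.
rewrite /serre !exprZn !sAl !sAr !sAl !scalerA !scalerBr !scalerDr !scalerA.
rewrite scalerN scalerA; congr (_ - _ + _ - _); congr (_ *: _); rewrite ?exprS ?expr0; ring.
Qed.

Lemma chyp_scale (F : fieldType) (t : F) (V : algType F) (a b f g : V) (s s' : F) :
  chyp t a b f g -> chyp t a b (s *: (a * f)) (s' *: (b * g)).
Proof.
case=> hab hfa hfb hga hgb; split => //.
- by rewrite sAl -mulrA hfa !sAr !scalerA mulrC !mulrA.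
- by rewrite sAl -mulrA hfb !sAr !scalerA mulrC !mulrA hab.
- by rewrite sAl -mulrA hga !sAr !scalerA mulrC !mulrA hab.
- by rewrite sAl -mulrA hgb !sAr !scalerA mulrC !mulrA.
Qed.

Lemma qint3 (F : fieldType) (q : F) : q != 0 -> q - q^-1 != 0 ->
  qint q 3 = q ^+ 2 + 1 + (q ^+ 2)^-1.
Proof.
move=> q0 d0; rewrite /qint.
have qq1 : q * q - 1 != 0 by rewrite -(mulfV q0) -mulrBr mulf_neq0.
field; by rewrite q0 qq1.
Qed.

Definition hA (F : fieldType) (q : F) (A : algType F) (G : Uq_gens A) : U_gens A :=
  UGens (fun k => Km G k - (q * (q - q^-1) ^+ 2) *: (Km G k * ep G k))
        (fun k => Km G k + em G k) (Kp G) (Km G).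

Lemma partA (F : fieldType) (q : F) (A : algType F) (G : Uq_gens A) :
  q != 0 -> q - q^-1 != 0 -> Uq_rel q G -> U_rel q (hA q G).
Proof.
move=> q0 d0 hG.
have ey : forall k, (q * (q - q^-1) ^+ 2) *: (Km G k * ep G k) = Km G k * (cc q *: ep G k).
  by move=> k; rewrite sAr.
have hG' := hG.
case: hG' => [hinv [hK01 [hc1 [hc2 [hcom [[h01 h10] hserre]]]]]].
have hC : forall i j, i != j -> Kp G 0 * Kp G 1 = Kp G i * Kp G j.
  by move=> i j /I2_neq [[-> ->] | [-> ->]].
have hKK : forall i j, i != j -> Kp G i * Kp G j = Kp G j * Kp G i.
  by move=> i j /I2_neq [[-> ->] | [-> ->]].
have hKmKm : forall i j, i != j -> Km G i * Km G j = Km G j * Km G i.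
  move=> i j hij; have [hi1 hi2] := hinv i; have [hj1 hj2] := hinv j.
  have t1 := comm_inv (hKK i j hij) hi1 hi2.
  by apply/esym/(comm_inv (esym t1) hj1 hj2).
have hCm : forall i j, i != j -> Km G 0 * Km G 1 = Km G i * Km G j.
  move=> i j hij; have [[hi hj] | [hi hj]] := I2_neq hij; first by rewrite hi hj.
  by rewrite hi hj hKmKm.
rewrite /U_rel /hA /=.
split; first by move=> i; apply: hinv.
split.
  move=> i; have [j hij] := I2_oth i.
  have [_ _ _ _ [c1 c2 c3 c4]] := partA_rels q0 d0 hG hij.
  by rewrite (hC _ _ hij) ey.
split.
  move=> i; have [j hij] := I2_oth i; have [c1 _ _ _ _] := partA_rels q0 d0 hG hij.
  by apply: scale_eq1 => //; rewrite ey.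
split.
  move=> i; have [j hij] := I2_oth i; have [_ c2 _ _ _] := partA_rels q0 d0 hG hij.
  by apply: scale_eq1.
split.
  move=> i; have [j hij] := I2_oth i; have [_ _ c3 _ _] := partA_rels q0 d0 hG hij.
  by apply: scale_eq1 => //; rewrite ey.
split.
  move=> i j hij; have [_ _ _ c4 _] := partA_rels q0 d0 hG hij.
  by apply: scale_eqw => //; rewrite ey (hCm _ _ hij).
move=> i j hij.
have hji : j != i by rewrite eq_sym.
have [hi1 hi2] := hinv i; have [hj1 hj2] := hinv j.
have q2 : q ^+ 2 != 0 by rewrite expf_neq0.
have qm2 : q ^- 2 != 0 by rewrite invr_eq0.
have [ce1 cf1] := hc1 i; have [ce2 cf2] := hc1 j.
have [ce3 cf3] := hc2 i j hij; have [ce4 cf4] := hc2 j i hji.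
have [x1 _] := conj_comm2 q2 hi1 hi2 ce1; have [x2 _] := conj_comm2 q2 hj1 hj2 ce2.
have [x3 _] := conj_comm2 qm2 hi1 hi2 ce3; have [x4 _] := conj_comm2 qm2 hj1 hj2 ce4.
have [y1 _] := conj_comm2 qm2 hi1 hi2 cf1; have [y2 _] := conj_comm2 qm2 hj1 hj2 cf2.
have [y3 _] := conj_comm2 q2 hi1 hi2 cf3; have [y4 _] := conj_comm2 q2 hj1 hj2 cf4.
have chE : chyp (q ^+ 2) (Km G i) (Km G j) (ep G i) (ep G j) by split => //; apply: hKmKm.
have chF : chyp (q ^- 2) (Km G i) (Km G j) (em G i) (em G j).
  by split; rewrite ?invrK //; apply: hKmKm.
have [sE sF] := hserre i j hij.
have k3 : qint q 3 = q ^+ 2 + 1 + (q ^+ 2)^-1 by apply: qint3.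
have k3' : qint q 3 = q ^- 2 + 1 + (q ^- 2)^-1 by rewrite invrK k3; ring.
split.
  rewrite -!scaleNr (serre_shift q2 k3 (chyp_scale _ _ chE)) serre_scale.
  by rewrite (serre_conj q2 k3 chE) sE mulr0 scaler0.
by rewrite (serre_shift qm2 k3' chF).
Qed.

Definition HB (F : fieldType) (q : F) (A : algType F) (g : U_gens A) : Uq_gens A :=
  UqGens (fun k => (q * (q - q^-1) ^+ 2)^-1 *: (1 - kp g k * yp g k))
         (fun k => ym g k - km g k) (kp g) (km g).

Lemma partB (F : fieldType) (q : F) (A : algType F) (g : U_gens A) :
  q != 0 -> q - q^-1 != 0 -> U_rel q g -> Uq_rel q (HB q g).
Proof.
move=> q0 d0 hg.
have hg' := hg.
case: hg' => [hinv [hcent [h3 [h4 [h5 [h6 hserre]]]]]].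
have h01 : (0 : 'I_2) != 1 by [].
have h10 : (1 : 'I_2) != 0 by [].
have c0 : q * (q - q^-1) ^+ 2 != 0 by rewrite mulf_neq0 // expf_neq0.
have qq1 : q * q - 1 != 0 by rewrite -(mulfV q0) -mulrBr mulf_neq0.
rewrite /Uq_rel /HB /=.
split; first by move=> i; apply: hinv.
split; first by have [_ _ _ _ [_ _ ->]] := partB_rels q0 d0 hg h01.
split.
  move=> i; have [j hij] := I2_oth i; have [b1 b2 _ _ _] := partB_rels q0 d0 hg hij.
  by split => //; apply: conj_scale.
split.
  move=> i j hij; have [_ _ b3 b4 _] := partB_rels q0 d0 hg hij.
  by split => //; apply: conj_scale.
split.
  move=> i; have [j hij] := I2_oth i; have [_ _ _ _ [b5 _ _]] := partB_rels q0 d0 hg hij.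
  rewrite sAl sAr -scalerBr b5 scalerA; congr (_ *: _); field.
  by rewrite q0 qq1.
split.
  have [_ _ _ _ [_ b6 _]] := partB_rels q0 d0 hg h01.
  have [_ _ _ _ [_ b7 _]] := partB_rels q0 d0 hg h10.
  split; first by rewrite sAl sAr -scalerBr b6 scaler0.
  by rewrite sAl sAr -scalerBr -(opprB ((1 - kp g 1 * yp g 1) * (ym g 0 - km g 0))) b7 oppr0 scaler0.
move=> i j hij.
have hji : j != i by rewrite eq_sym.
have [hi1 hi2] := hinv i; have [hj1 hj2] := hinv j.
have q2 : q ^+ 2 != 0 by rewrite expf_neq0.
have qm2 : q ^- 2 != 0 by rewrite invr_eq0.
have [a1 a2 a3 a4 [_ _ hkk]] := partB_rels q0 d0 hg hij.
have [a5 a6 a7 a8 _] := partB_rels q0 d0 hg hji.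
have hkmkm : km g i * km g j = km g j * km g i.
  have t1 := comm_inv hkk hi1 hi2.
  by apply/esym/(comm_inv (esym t1) hj1 hj2).
have [x1 _] := conj_comm2 q2 hi1 hi2 a1; have [x2 _] := conj_comm2 q2 hj1 hj2 a5.
have [x3 _] := conj_comm2 qm2 hi1 hi2 a3; have [x4 _] := conj_comm2 qm2 hj1 hj2 a7.
have [y1 _] := conj_comm2 qm2 hi1 hi2 a2; have [y2 _] := conj_comm2 qm2 hj1 hj2 a6.
have [y3 _] := conj_comm2 q2 hi1 hi2 a4; have [y4 _] := conj_comm2 q2 hj1 hj2 a8.
have chX : chyp (q ^+ 2) (km g i) (km g j) (1 - kp g i * yp g i) (1 - kp g j * yp g j).
  by split.
have chF : chyp (q ^- 2) (km g i) (km g j) (ym g i - km g i) (ym g j - km g j).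
  by split; rewrite ?invrK.
have [sY sF] := hserre i j hij.
have k3 : qint q 3 = q ^+ 2 + 1 + (q ^+ 2)^-1 by apply: qint3.
have k3' : qint q 3 = q ^- 2 + 1 + (q ^- 2)^-1 by rewrite invrK k3; ring.
split; last first.
  by rewrite -(serre_shift qm2 k3' chF) !(addrC (km g _)) !subrK.
have hy : forall k, (km g k * kp g k = 1) ->
    yp g k = km g k + (-1) *: (km g k * (1 - kp g k * yp g k)).
  move=> k hk.
  by rewrite scaleN1r mulrBr mulr1 mulrA hk mul1r opprB addrC subrK.
have H := sY.
rewrite {1}(hy i hi2) {1}(hy j hj2) (serre_shift q2 k3 (chyp_scale _ _ chX)) in H.
rewrite serre_scale (serre_conj q2 k3 chX) in H.
have H1 : (-1) ^+ 3 * (-1) = 1 :> F by ring.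
rewrite H1 scale1r in H.
rewrite serre_scale.
set S := serre q _ _ in H *.
have -> : S = kp g j * kp g i * kp g i * kp g i * (km g i * km g i * km g i * km g j * S).
  rewrite !mulrA -(mulrA _ (kp g i) (km g i)) hi1 mulr1.
  rewrite -(mulrA _ (kp g i) (km g i)) hi1 mulr1.
  rewrite -(mulrA _ (kp g i) (km g i)) hi1 mulr1.
  by rewrite hj1 mul1r.
by rewrite H !mulr0 scaler0.
Qed.

Lemma alg_hom_id (F : fieldType) (A : algType F) : alg_hom (fun x : A => x).
Proof. by split. Qed.

Lemma alg_hom_comp (F : fieldType) (A B C : algType F) (f : A -> B) (g : B -> C) :
  alg_hom f -> alg_hom g -> alg_hom (fun x => g (f x)).
Proof.
move=> [f1 f2 f3 f4] [g1 g2 g3 g4]; split.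
- by move=> x y; rewrite f1 g1.
- by move=> a x; rewrite f2 g2.
- by rewrite f3 g3.
- by move=> x y; rewrite f4 g4.
Qed.

Lemma alg_homN (F : fieldType) (A B : algType F) (f : A -> B) x :
  alg_hom f -> f (- x) = - f x.
Proof. by move=> [_ f2 _ _]; rewrite -scaleN1r f2 scaleN1r. Qed.

Lemma alg_homB (F : fieldType) (A B : algType F) (f : A -> B) x y :
  alg_hom f -> f (x - y) = f x - f y.
Proof. by move=> hf; have [f1 _ _ _] := hf; rewrite f1 alg_homN. Qed.

Unset Implicit Arguments.

Theorem theorem2p1 (F : closedFieldType) (q : F)
  (hq0 : q != 0) (hq : not_root_of_unity q)
  (Uq : algType F) (G : Uq_gens Uq) (hUq : is_Uq q G)
  (U : algType F) (g : U_gens U) (hU : is_U q g) :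
  exists (phi : U -> Uq) (psi : Uq -> U),
    alg_hom phi /\ alg_hom psi /\ cancel phi psi /\ cancel psi phi /\
        (forall i,
          [/\ phi (kp g i) = Kp G i, phi (km g i) = Km G i,
              phi (ym g i) = Km G i + em G i &
              phi (yp g i) = Km G i - (q * (q - q^-1) ^+ 2) *: (Km G i * ep G i)]) /\
        (forall i,
          [/\ psi (Kp G i) = kp g i, psi (Km G i) = km g i,
              psi (em G i) = ym g i - km g i &
              psi (ep G i) = (q * (q - q^-1) ^+ 2)^-1 *: (1 - kp g i * yp g i)]).
Proof.
have d0 : q - q^-1 != 0.
  apply/negP => /eqP /subr0_eq h.
  by have := hq 2%N isT; rewrite expr2 {2}h mulfV // eqxx.
have c0 : q * (q - q^-1) ^+ 2 != 0 by rewrite mulf_neq0 // expf_neq0.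
have [phi [phiH phiG _]] := hU.2 Uq (hA q G) (partA hq0 d0 hUq.1).
have [psi [psiH psiG _]] := hUq.2 U (HB q g) (partB hq0 d0 hU.1).
exists phi, psi.
have [phi1 phi2 phi3 phi4] := phiH; have [psi1 psi2 psi3 psi4] := psiH.
split => //; split => //.
split.
  have [f [_ _ fU]] := hU.2 U g hU.1.
  have e2 := fU _ (alg_hom_id U) (fun i => And4 erefl erefl erefl erefl).
  suff H : U_hom_on_gens g g (fun x => psi (phi x)).
    by move=> x; have := fU _ (alg_hom_comp phiH psiH) H x; rewrite -(e2 x).
  move=> i; have [p1 p2 p3 p4] := phiG i; have [s1 s2 s3 s4] := psiG i.
  rewrite /= in p1 p2 p3 p4 s1 s2 s3 s4.
  have [hi1 hi2] := (hU.1).1 i.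
  split.
  - rewrite p1 (alg_homB _ _ psiH) psi2 psi4 s4 s1 sAr scalerA mulfV // scale1r.
    by rewrite mulrBr mulr1 mulrA hi2 mul1r opprB addrC subrK.
  - by rewrite p2 psi1 s4 s2 addrC subrK.
  - by rewrite p3 s3.
  - by rewrite p4 s4.
split.
  have [f [_ _ fU]] := hUq.2 Uq G hUq.1.
  have e2 := fU _ (alg_hom_id Uq) (fun i => And4 erefl erefl erefl erefl).
  suff H : Uq_hom_on_gens G G (fun x => phi (psi x)).
    by move=> x; have := fU _ (alg_hom_comp psiH phiH) H x; rewrite -(e2 x).
  move=> i; have [p1 p2 p3 p4] := phiG i; have [s1 s2 s3 s4] := psiG i.
  rewrite /= in p1 p2 p3 p4 s1 s2 s3 s4.
  have [hi1 hi2] := (hUq.1).1 i.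
  split.
  - rewrite s1 phi2 (alg_homB _ _ phiH) phi3 phi4 p3 p1 mulrBr hi1 sAr mulrA hi1 mul1r.
    by rewrite subKr scalerA mulVf // scale1r.
  - by rewrite s2 (alg_homB _ _ phiH) p2 p4 addrC addKr.
  - by rewrite s3 p3.
  - by rewrite s4 p4.
split => i.
  have [p1 p2 p3 p4] := phiG i; by split.
have [s1 s2 s3 s4] := psiG i; by split.
Qed.
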